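(* Let $\lambda<\kappa$ be infinite cardinals with $\kappa$ regular and $2^\lambda=2^\kappa$. Then for every $A\subseteq\kappa^\kappa$ there is a closed set $C\subseteq\kappa^\kappa\times2^\kappa$ such that $A=\{f\in\kappa^\kappa\mid\exists g\in2^\kappa\,((f,g)\in C)\}$.
   Context: $\kappa^\kappa$ and $2^\kappa$ carry the usual (bounded) topology generated by the sets $\{\zeta\mid\eta\subseteq\zeta\}$ for $\eta$ a function with domain some ordinal $\alpha<\kappa$ (into $\kappa$, resp. $\{0,1\}$); $\kappa^\kappa\times2^\kappa$ carries the product topology, and ''closed'' refers to this topology. *)

(* Defs.v *)
(* Cardinals are represented by types (up to equipotence);
   the cardinal kappa is represented as a von Neumann-style initial ordinal:
   a type K with a strict well-order ltK such that no proper initial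
   segment is equipotent with (injects onto) K. *)
From Stdlib Require Import Classical.

Set Implicit Arguments.

Definition injective {A B : Type} (f : A -> B) : Prop :=
  forall x y, f x = f y -> x = y.

Definition bijective {A B : Type} (f : A -> B) : Prop :=
  injective f /\ forall y, exists x, f x = y.

Definition card_le (A B : Type) : Prop := exists f : A -> B, injective f.
Definition card_lt (A B : Type) : Prop := card_le A B /\ ~ card_le B A.
Definition equipotent (A B : Type) : Prop := exists f : A -> B, bijective f.

Definition infinite (A : Type) : Prop := card_le nat A.

Definition is_wellorder {K : Type} (lt : K -> K -> Prop) : Prop :=
  (forall a, ~ lt a a) /\
  (forall a b c, lt a b -> lt b c -> lt a c) /\
  (forall a b, lt a b \/ a = b \/ lt b a) /\
  well_founded lt.

Definition is_infinite_cardinal {K : Type} (lt : K -> K -> Prop) : Prop :=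
  is_wellorder lt /\ infinite K /\
  forall a : K, ~ card_le K {b : K | lt b a}.

Definition regular {K : Type} (lt : K -> K -> Prop) : Prop :=
  forall S : K -> Prop,
    (forall a, exists b, S b /\ (a = b \/ lt a b)) -> card_le K {x : K | S x}.

(* basic open set of X^kappa: all h extending f restricted to alpha
   (eta := f|alpha, a function with domain the ordinal alpha < kappa) *)
Definition basic_nbhd {K X : Type} (lt : K -> K -> Prop)
    (alpha : K) (f : K -> X) (h : K -> X) : Prop :=
  forall b, lt b alpha -> h b = f b.

Definition open_prod {K : Type} (lt : K -> K -> Prop)
    (U : (K -> K) -> (K -> bool) -> Prop) : Prop :=
  forall f g, U f g ->
    exists alpha beta : K,
      forall f' g', basic_nbhd lt alpha f f' -> basic_nbhd lt beta g g' -> U f' g'.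

Definition closed_prod {K : Type} (lt : K -> K -> Prop)
    (C : (K -> K) -> (K -> bool) -> Prop) : Prop :=
  open_prod lt (fun f g => ~ C f g).

(* Main.v *)
Require Import Defs.
From Stdlib Require Import Classical ClassicalEpsilon FunctionalExtensionality Arith Lia Cantor.

Definition lesub {X Y : Type} (A : X -> Prop) (B : Y -> Prop) : Prop :=
  exists f : X -> Y, (forall x, A x -> B (f x)) /\
    (forall x y, A x -> A y -> f x = f y -> x = y).

Definition infP {X : Type} (A : X -> Prop) := lesub (fun _ : nat => True) A.

Lemma lesub_trans {X Y Z : Type} (A : X -> Prop) (B : Y -> Prop) (C : Z -> Prop) :
  lesub A B -> lesub B C -> lesub A C.
Proof.
  intros [f [Hf If]] [g [Hg Ig]]. exists (fun x => g (f x)). split; auto.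
Qed.

Lemma lesub_sub {X : Type} (A B : X -> Prop) : (forall x, A x -> B x) -> lesub A B.
Proof. intros H. exists (fun x => x). split; auto. Qed.

Definition Sq {X : Type} (A : X -> Prop) : X * X -> Prop := fun p => A (fst p) /\ A (snd p).

Lemma lesub_sq {X Y : Type} (A : X -> Prop) (B : Y -> Prop) :
  lesub A B -> lesub (Sq A) (Sq B).
Proof.
  intros [f [Hf If]]. exists (fun p => (f (fst p), f (snd p))). split.
  - intros [x y] [H1 H2]; split; simpl in *; auto.
  - intros [x y] [x' y'] [H1 H2] [H3 H4] E; simpl in *. injection E; intros.
    f_equal; auto.
Qed.

Lemma wf_min {K : Type} (lt : K -> K -> Prop) (wf : well_founded lt) (P : K -> Prop) :
  (exists x, P x) -> exists x, P x /\ forall y, P y -> ~ lt y x.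
Proof.
  intros [x Px]. revert Px. induction (wf x) as [x _ IH]. intros Px.
  destruct (classic (exists y, P y /\ lt y x)) as [[y [Py Hy]]|N].
  - exact (IH y Hy Py).
  - exists x; split; auto. intros y Py Hy; apply N; eauto.
Qed.

Lemma inf_remove {X : Type} (A : X -> Prop) z : infP A -> infP (fun y => A y /\ y <> z).
Proof.
  intros [h [Hh Hi]].
  destruct (classic (exists n0, h n0 = z)) as [[n0 Hn0]|N].
  - exists (fun n => h (n + S n0)). split.
    + intros n _. split. apply Hh; auto. intro E. subst z. apply Hi in E; auto; lia.
    + intros x y _ _ E. apply Hi in E; auto; lia.
  - exists h. split; auto. intros n _. split; auto. intro E; apply N; eauto.
Qed.

Lemma hotel {X : Type} (A : X -> Prop) z : infP A -> lesub (fun y => A y \/ y = z) A.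
Proof.
  intros [h [Hh Hi]].
  set (ix := fun y => epsilon (inhabits 0) (fun n => h n = y)).
  assert (Hix : forall n, ix (h n) = n).
  { intros n. apply Hi; auto. unfold ix. apply (epsilon_spec (inhabits 0) (fun m => h m = h n)). eauto. }
  set (f := fun y => if excluded_middle_informative (y = z) then h 0 else
        if excluded_middle_informative (exists n, h n = y) then h (S (ix y)) else y).
  exists f. split.
  - intros y Hy. unfold f. destruct (excluded_middle_informative (y = z)). apply Hh; auto.
    destruct (excluded_middle_informative _). apply Hh; auto. destruct Hy; [auto| contradiction].
  - intros x y Hx Hy. unfold f.
    destruct (excluded_middle_informative (x = z)) as [ex|nx];
    destruct (excluded_middle_informative (y = z)) as [ey|ny]; try congruence;
    repeat match goal with |- context [excluded_middle_informative ?P] =>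
      destruct (excluded_middle_informative P) as [[? ?]|?] end; subst;
    rewrite ?Hix; intro E;
    repeat match goal with
    | H : h _ = h _ |- _ => apply Hi in H; [|exact I|exact I]
    end; try lia; try congruence; firstorder.
  all: exfalso; match goal with H : forall _, _ -> False |- _ => eapply H; simpl; (symmetry; eassumption) || eassumption end.
Qed.

Definition seg {K : Type} (lt : K -> K -> Prop) (a : K) := fun b => lt b a.
Definition cseg {K : Type} (lt : K -> K -> Prop) (a : K) := fun b => lt b a \/ b = a.

Lemma no_max {K : Type} (lt : K -> K -> Prop) (Hwo : is_wellorder lt) (S : K -> Prop)
  (Hinf : infP S) (Hinit : forall a, S a -> ~ lesub S (seg lt a)) :
  forall m, S m -> exists a, S a /\ lt m a.
Proof.
  destruct Hwo as [Hirr [Htr [Htri Hwf]]].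
  intros m Sm. apply NNPP; intro N.
  apply (Hinit m Sm).
  apply lesub_trans with (B := fun y => seg lt m y \/ y = m).
  - apply lesub_sub. intros y Sy. destruct (Htri y m) as [H|[H|H]]; auto.
    exfalso; apply N; eauto.
  - apply hotel.
    apply lesub_trans with (B := fun y => S y /\ y <> m). apply inf_remove; auto.
    apply lesub_sub. intros y [Sy ny]. destruct (Htri y m) as [H|[H|H]]; auto.
    contradiction. exfalso; apply N; eauto.
Qed.

Lemma greedy {P : Type} (gl : P -> P -> Prop) (wf : well_founded gl)
  (tot : forall p q, p <> q -> gl p q \/ gl q p) {K : Type} (S : K -> Prop) (D : P -> Prop)
  (k0 : K) (Hsmall : forall p, D p -> ~ lesub S (fun q => D q /\ gl q p)) : lesub D S.
Proof.
  set (F := fun (p : P) (rec : forall q, gl q p -> K) =>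
        epsilon (inhabits k0) (fun c => S c /\ forall q (h : gl q p), D q -> rec q h <> c)).
  set (G := Fix wf (fun _ => K) F).
  assert (HG : forall p, G p = epsilon (inhabits k0) (fun c => S c /\ forall q (h : gl q p), D q -> G q <> c)).
  { intros p. unfold G. rewrite Fix_eq. reflexivity.
    intros x f g Hfg. assert (f = g).
    { apply functional_extensionality_dep; intro y. apply functional_extensionality_dep; intro h. auto. }
    subst; reflexivity. }
  assert (Hspec : forall p, D p -> S (G p) /\ forall q, gl q p -> D q -> G q <> G p).
  { intros p Dp. rewrite HG.
    assert (Ex : exists c, S c /\ forall q (h : gl q p), D q -> G q <> c).
    { apply NNPP; intro N. apply (Hsmall p Dp).
      exists (fun c => epsilon (inhabits p) (fun q => gl q p /\ D q /\ G q = c)).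
      assert (Hc : forall c, S c -> gl (epsilon (inhabits p) (fun q => gl q p /\ D q /\ G q = c)) p /\
                 D (epsilon (inhabits p) (fun q => gl q p /\ D q /\ G q = c)) /\
                 G (epsilon (inhabits p) (fun q => gl q p /\ D q /\ G q = c)) = c).
      { intros c Sc. apply epsilon_spec. apply NNPP; intro N2. apply N. exists c. split; auto.
        intros q h Dq E. apply N2. eauto. }
      split.
      - intros c Sc. destruct (Hc c Sc) as [? [? ?]]; auto.
      - intros c c' Sc Sc' E. destruct (Hc c Sc) as [_ [_ E1]]. destruct (Hc c' Sc') as [_ [_ E2]].
        rewrite <- E1, <- E2, E. reflexivity. }
    pose proof (epsilon_spec (inhabits k0) _ Ex) as [H1 H2].
    split; auto. }
  exists G. split.
  - intros p Dp; apply Hspec; auto.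
  - intros p q Dp Dq E. apply NNPP; intro N. destruct (tot p q N) as [H|H].
    + apply (proj2 (Hspec q Dq) p H Dp). auto.
    + apply (proj2 (Hspec p Dp) q H Dq). auto.
Qed.

Definition mx {K : Type} (lt : K -> K -> Prop) (p : K * K) : K :=
  if excluded_middle_informative (lt (fst p) (snd p)) then snd p else fst p.

Definition gl {K : Type} (lt : K -> K -> Prop) (p q : K * K) : Prop :=
  lt (mx lt p) (mx lt q) \/ (mx lt p = mx lt q /\
    (lt (fst p) (fst q) \/ (fst p = fst q /\ lt (snd p) (snd q)))).

Section G.
Context {K : Type} (lt : K -> K -> Prop) (Hwo : is_wellorder lt).

Lemma mx_in p : mx lt p = fst p \/ mx lt p = snd p.
Proof. unfold mx. destruct (excluded_middle_informative _); auto. Qed.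

Lemma mx_ge p : cseg lt (mx lt p) (fst p) /\ cseg lt (mx lt p) (snd p).
Proof.
  destruct Hwo as [Hirr [Htr [Htri Hwf]]]. unfold cseg, mx.
  destruct (excluded_middle_informative _) as [H|H]; split; auto.
  destruct (Htri (fst p) (snd p)) as [H1|[H1|H1]]; auto. contradiction.
Qed.

Lemma gl_bound p q : gl lt q p -> cseg lt (mx lt p) (fst q) /\ cseg lt (mx lt p) (snd q).
Proof.
  destruct Hwo as [Hirr [Htr [Htri Hwf]]].
  intros H. assert (Hm : cseg lt (mx lt p) (mx lt q)).
  { destruct H as [H|[H _]]; unfold cseg; auto. }
  destruct (mx_ge q) as [H1 H2]. unfold cseg in *.
  split; [destruct H1 as [E|E]|destruct H2 as [E|E]]; rewrite ?E; auto;
  destruct Hm as [Hm|Hm]; rewrite <- ?Hm; eauto.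
Qed.

Lemma gl_wf : well_founded (gl lt).
Proof.
  destruct Hwo as [Hirr [Htr [Htri Hwf]]].
  assert (H: forall m a b, mx lt (a,b) = m -> Acc (gl lt) (a,b)).
  { intro m. induction (Hwf m) as [m _ IHm].
    intro a. induction (Hwf a) as [a _ IHa].
    intro b. induction (Hwf b) as [b _ IHb].
    intros Hm. constructor. intros [c d] Hgl. destruct Hgl as [H1|[H1 [H2|[H2 H3]]]]; cbn [fst snd] in *.
    - apply (IHm (mx lt (c,d))); [rewrite <- Hm; auto | reflexivity].
    - apply IHa; auto. congruence.
    - subst c. apply IHb; auto. congruence. }
  intros [a b]; eauto.
Qed.

Lemma gl_tot p q : p <> q -> gl lt p q \/ gl lt q p.
Proof.
  destruct Hwo as [Hirr [Htr [Htri Hwf]]]. unfold gl. intros N.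
  destruct (Htri (mx lt p) (mx lt q)) as [H|[H|H]]; [left; left; auto| |right; left; auto].
  destruct (Htri (fst p) (fst q)) as [H1|[H1|H1]];
    [left; right; auto| |right; right; split; auto].
  destruct (Htri (snd p) (snd q)) as [H2|[H2|H2]];
    [left; right; auto| |right; right; split; auto].
  exfalso; apply N. destruct p, q; simpl in *; congruence.
Qed.

End G.

Section Om.
Context {K : Type} (lt : K -> K -> Prop) (Hwo : is_wellorder lt).

Definition mn (k0 : K) (T : K -> Prop) : K :=
  epsilon (inhabits k0) (fun x => T x /\ forall y, T y -> ~ lt y x).

Lemma mn_spec k0 T : (exists x, T x) -> T (mn k0 T) /\ forall y, T y -> ~ lt y (mn k0 T).
Proof.
  intros H. destruct Hwo as [_ [_ [_ Hwf]]].
  apply (epsilon_spec (inhabits k0) (fun x => T x /\ forall y, T y -> ~ lt y x)).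
  apply wf_min; auto.
Qed.

Lemma omega_case (S : K -> Prop) (Hinf : infP S)
  (Hfin : forall w, S w -> ~ infP (seg lt w)) : lesub (Sq S) S.
Proof.
  pose proof Hwo as [Hirr [Htr [Htri Hwf]]].
  destruct Hinf as [h0 [Hh0 Ih0]]. set (k0 := h0 0).
  assert (Ne : exists x, S x) by (exists k0; apply Hh0; auto).
  assert (NM : forall x, S x -> exists z, S z /\ lt x z).
  { intros x Sx. apply NNPP; intro N. apply (Hfin x Sx).
    apply lesub_trans with (B := fun y => S y /\ y <> x).
    apply inf_remove. exists h0; split; auto.
    apply lesub_sub. intros y [Sy ny]. destruct (Htri y x) as [H|[H|H]]; auto.
    contradiction. exfalso; apply N; eauto. }
  set (e := fix e n := match n with 0 => mn k0 S | Datatypes.S n => mn k0 (fun z => S z /\ lt (e n) z) end).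
  assert (E0 : S (e 0) /\ forall y, S y -> ~ lt y (e 0)) by (apply mn_spec; auto).
  assert (ES : forall n, S (e n) -> (S (e (Datatypes.S n)) /\ lt (e n) (e (Datatypes.S n))) /\
      forall y, (S y /\ lt (e n) y) -> ~ lt y (e (Datatypes.S n))).
  { intros n Sn. apply (mn_spec k0 (fun z => S z /\ lt (e n) z)). apply NM; auto. }
  assert (Sn : forall n, S (e n)).
  { induction n. apply E0. apply ES; auto. }
  assert (Mono : forall n m, n < m -> lt (e n) (e m)).
  { intros n m H. induction H. apply ES; auto. eapply Htr; eauto. apply ES; auto. }
  assert (Inj : forall n m, e n = e m -> n = m).
  { intros n m E. destruct (Nat.lt_trichotomy n m) as [H|[H|H]]; auto;
    apply Mono in H; rewrite E in H; exfalso; eapply Hirr; eauto. }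
  assert (Surj : forall z, S z -> exists n, e n = z).
  { intros z Sz. apply NNPP; intro N.
    assert (B : forall n, lt (e n) z).
    { induction n.
      - destruct (Htri (e 0) z) as [H|[H|H]]; auto. exfalso; apply N; eauto.
        exfalso; eapply (proj2 E0); eauto.
      - destruct (Htri (e (Datatypes.S n)) z) as [H|[H|H]]; auto. exfalso; apply N; eauto.
        exfalso; eapply (proj2 (ES n (Sn n))); eauto. }
    apply (Hfin z Sz). exists e; split; [intros n _; apply B|auto]. }
  set (inv := fun z => epsilon (inhabits 0) (fun n => e n = z)).
  assert (Hinv : forall z, S z -> e (inv z) = z).
  { intros z Sz. apply (epsilon_spec (inhabits 0) (fun n => e n = z)). auto. }
  exists (fun p => e (to_nat (inv (fst p), inv (snd p)))). split.
  - intros p _; auto.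
  - intros [x y] [x' y'] [Sx Sy] [Sx' Sy'] E. cbn [fst snd] in *.
    apply Inj in E. apply (f_equal of_nat) in E. rewrite !cancel_of_to in E.
    injection E; intros E1 E2.
    rewrite <- (Hinv x), <- (Hinv y), <- (Hinv x'), <- (Hinv y'), E1, E2; auto.
Qed.

End Om.

Definition Qp {K : Type} (lt : K -> K -> Prop) (S : K -> Prop) : Prop :=
  infP S -> (forall a, S a -> ~ lesub S (seg lt a)) -> lesub (Sq S) S.

Section St.
Context {K : Type} (lt : K -> K -> Prop) (Hwo : is_wellorder lt).

Lemma step (S : K -> Prop) (Hdc : forall a b, S a -> lt b a -> S b)
  (IH : forall a, S a -> Qp lt (seg lt a)) : Qp lt S.
Proof.
  pose proof Hwo as [Hirr [Htr [Htri Hwf]]].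
  intros Hinf Hinit.
  destruct (classic (exists w, S w /\ infP (seg lt w))) as [Hw | Hnw].
  2:{ apply (omega_case lt Hwo); auto. intros w Sw Iw; apply Hnw; eauto. }
  destruct (wf_min lt Hwf _ Hw) as [w [[Sw Iw] Mw]].
  assert (Qw : lesub (Sq (seg lt w)) (seg lt w)).
  { apply (IH w Sw Iw). intros b Hb Hle. apply (Mw b); auto. split.
    - apply (Hdc w b Sw Hb).
    - apply lesub_trans with (B := seg lt w); auto. }
  assert (Key : forall m, S m -> ~ lesub S (Sq (cseg lt m))).
  { intros m Sm HS.
    destruct (no_max lt Hwo S Hinf Hinit m Sm) as [a0 [Sa0 Ha0]].
    destruct (wf_min lt Hwf (fun a => S a /\ lesub (cseg lt m) (seg lt a))) as [a [[Sa Ha] Ma]].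
    { exists a0. split; auto. apply lesub_sub. intros y [Hy|Hy]; unfold seg; subst; eauto. }
    destruct (classic (infP (seg lt a))) as [Ia|Ia].
    - assert (Qa : lesub (Sq (seg lt a)) (seg lt a)).
      { apply (IH a Sa Ia). intros b Hb Hle. apply (Ma b); auto. split.
        - apply (Hdc a b Sa Hb).
        - apply lesub_trans with (B := seg lt a); auto. }
      apply (Hinit a Sa).
      apply lesub_trans with (B := Sq (cseg lt m)); auto.
      apply lesub_trans with (B := Sq (seg lt a)); auto.
      apply lesub_sq; auto.
    - assert (Haw : lt a w).
      { destruct (Htri a w) as [H|[H|H]]; auto. subst; contradiction.
        exfalso; apply Ia. apply lesub_trans with (B := seg lt w); auto.
        apply lesub_sub. intros y Hy. unfold seg in *; eauto. }
      apply (Hinit w Sw).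
      apply lesub_trans with (B := Sq (cseg lt m)); auto.
      apply lesub_trans with (B := Sq (seg lt w)); auto.
      apply lesub_sq. apply lesub_trans with (B := seg lt a); auto.
      apply lesub_sub. intros y Hy. unfold seg in *; eauto. }
  destruct Hinf as [h0 [Hh0 Ih0]].
  apply (greedy (gl lt) (gl_wf lt Hwo) (gl_tot lt Hwo) S (Sq S) (h0 0)).
  intros p [S1 S2] Hle.
  assert (Sm : S (mx lt p)) by (destruct (mx_in lt p) as [E|E]; rewrite E; auto).
  apply (Key (mx lt p) Sm).
  apply lesub_trans with (B := fun q => Sq S q /\ gl lt q p); auto.
  apply lesub_sub. intros q [_ Hq]. apply (gl_bound lt Hwo); auto.
Qed.

Theorem hessenberg (Hk : is_infinite_cardinal lt) :
  exists j : K * K -> K, forall p q, j p = j q -> p = q.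
Proof.
  pose proof Hwo as [Hirr [Htr [Htri Hwf]]].
  assert (All : forall a, Qp lt (seg lt a)).
  { intros a. induction (Hwf a) as [a _ IHa]. apply step.
    - intros x y Hx Hy. unfold seg in *; eauto.
    - intros b Hb; apply IHa; auto. }
  assert (QT : Qp lt (fun _ => True)).
  { apply step; auto. }
  destruct Hk as [_ [[h Ih] Hini]].
  destruct QT as [j [_ Ij]].
  - exists h. split; auto.
  - intros a _ [f [Hf If]]. apply (Hini a).
    exists (fun x => exist _ (f x) (Hf x I)). intros x y E.
    apply If; auto. apply (f_equal (@proj1_sig _ _)) in E. exact E.
  - exists j. intros p q E. apply Ij; auto; split; auto.
Qed.

End St.

Theorem lemma2p1 (K : Type) (ltK : K -> K -> Prop) (L : Type)
  (Hkappa : is_infinite_cardinal ltK) (Hreg : regular ltK)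
  (Hlambda : infinite L) (HLK : card_lt L K)
  (Hexp : equipotent (L -> bool) (K -> bool)) :
  forall A : (K -> K) -> Prop,
    exists C : (K -> K) -> (K -> bool) -> Prop,
      closed_prod ltK C /\ (forall f : K -> K, A f <-> exists g : K -> bool, C f g).
Proof.
  intros A.
  pose proof Hkappa as [Hwo [HinfK Hini]].
  pose proof Hwo as [Hirr [Htr [Htri Hwf]]].
  destruct (hessenberg ltK Hwo Hkappa) as [j Ij].
  destruct Hlambda as [hl _]. set (l0 := hl 0).
  destruct HLK as [[iota Iiota] HnKL].
  assert (Bd : exists a, forall l, ltK (iota l) a).
  { apply NNPP; intro N.
    assert (Unb : forall a, exists b, (exists l, iota l = b) /\ (a = b \/ ltK a b)).
    { intro a. apply NNPP; intro N2. apply N. exists a. intro l.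
      destruct (Htri (iota l) a) as [H|[H|H]]; auto; exfalso; apply N2; eauto. }
    destruct (Hreg _ Unb) as [r Ir]. apply HnKL.
    exists (fun k => epsilon (inhabits l0) (fun l => iota l = proj1_sig (r k))).
    intros k k' E.
    assert (Hs : forall k, iota (epsilon (inhabits l0) (fun l => iota l = proj1_sig (r k))) = proj1_sig (r k)).
    { intros k0. apply (epsilon_spec (inhabits l0) (fun l => iota l = proj1_sig (r k0))).
      exact (proj2_sig (r k0)). }
    apply Ir. pose proof (Hs k) as H1. pose proof (Hs k') as H2. rewrite E in H1.
    rewrite H1 in H2. destruct (r k) as [x px], (r k') as [y py]. simpl in H2. subst.
    f_equal. apply proof_irrelevance. }
  destruct Bd as [a Ha].
  assert (NMK : forall b, exists c, ltK b c).
  { intros b. destruct (no_max ltK Hwo (fun _ => True)) with (m := b) as [c [_ Hc]]; eauto.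
    - destruct HinfK as [h Ih]. exists h; split; auto.
    - intros a' _ [f [Hf If]]. apply (Hini a').
      exists (fun x => exist _ (f x) (Hf x I)). intros x y E.
      apply If; auto. apply (f_equal (@proj1_sig _ _)) in E. exact E. }
  destruct Hexp as [phi [Iphi Sphi]].
  set (psi := fun u : K -> bool => epsilon (inhabits (fun _ : L => false)) (fun v => phi v = u)).
  assert (Hpsi : forall u, phi (psi u) = u).
  { intros u. apply (epsilon_spec (inhabits (fun _ : L => false)) (fun v => phi v = u)). auto. }
  set (chi := fun (f : K -> K) (k : K) =>
        if excluded_middle_informative (exists b, k = j (b, f b)) then true else false).
  set (code := fun f => psi (chi f)).
  assert (Icode : forall f g, code f = code g -> f = g).
  { intros f g E. assert (Ec : chi f = chi g).
    { rewrite <- (Hpsi (chi f)), <- (Hpsi (chi g)). unfold code in E. rewrite E. auto. }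
    apply functional_extensionality. intros b.
    assert (T : chi g (j (b, f b)) = true).
    { rewrite <- Ec. unfold chi. destruct (excluded_middle_informative _) as [_|N]; auto.
      exfalso; apply N; eauto. }
    unfold chi in T. destruct (excluded_middle_informative _) as [[b' Eb]|_]; [|discriminate].
    apply Ij in Eb. injection Eb; intros; subst; auto. }
  exists (fun f g => A f /\ code f = (fun l => g (iota l))).
  split.
  - intros f g nC.
    destruct (classic (exists h, A h /\ code h = (fun l => g (iota l)))) as [[h [Ah Eh]]|N].
    + assert (Dif : exists b, f b <> h b).
      { apply NNPP; intro N. apply nC. split.
        - replace f with h; auto. symmetry. apply functional_extensionality. intros b.
          apply NNPP; intro N2; apply N; eauto.
        - replace f with h; auto. symmetry. apply functional_extensionality. intros b.
          apply NNPP; intro N2; apply N; eauto. }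
      destruct Dif as [b Hb]. destruct (NMK b) as [alpha Halpha].
      exists alpha, a. intros f' g' Hf' Hg' [Af' Ef'].
      assert (f' = h).
      { apply Icode. rewrite Ef', Eh. apply functional_extensionality. intros l.
        apply Hg'. auto. }
      subst f'. apply Hb. symmetry. apply Hf'. auto.
    + exists a, a. intros f' g' _ Hg' [Af' Ef']. apply N. exists f'. split; auto.
      rewrite Ef'. apply functional_extensionality. intros l. apply Hg'. auto.
  - intros f. split.
    + intros Af.
      exists (fun k => if excluded_middle_informative (exists l, iota l = k)
                 then code f (epsilon (inhabits l0) (fun l => iota l = k)) else false).
      split; auto. apply functional_extensionality. intros l.
      destruct (excluded_middle_informative _) as [Ex|N].
      * f_equal. apply Iiota. symmetry.
        apply (epsilon_spec (inhabits l0) (fun l' => iota l' = iota l)). auto.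
      * exfalso; apply N; eauto.
    + intros [g [Af _]]. auto.
Qed.
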